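(* Let $\mathcal M=(G,In,Out,Leak)$ be a linear compartmental model with $In=Out=\{1\}$. Then for every positive integer $j$, $$\sum_{F^*\in\mathcal F_j^{1,1}(\widetilde G^*_1)}\pi_{F^*}=\sum_{F\in\mathcal F_j(\widetilde G_1)}\pi_F.$$
   Context: A linear compartmental model $\mathcal M=(G,In,Out,Leak)$ consists of a finite directed graph $G=(V_G,E_G)$ without multi-edges, compartments $V_G=\{1,\dots,n\}$, and subsets $In,Out,Leak\subseteq V_G$; edge $q\to p$ has label $a_{pq}$. The leak-augmented graph $\widetilde G$ is obtained from $G$ by adding a node $0$ and, for each $p\in Leak$, an edge $p\to0$ labeled $a_{0p}$. $\widetilde G^*_1$ is obtained from $\widetilde G$ by removing all edges outgoing from node $1$. $\widetilde G_1$ is obtained from $\widetilde G^*_1$ by replacing every edge $p\to1$ (label $a_{1p}$) by an edge $p\to0$ with the same label $a_{1p}$ (multi-edges are allowed, i.e. this edge is kept separate from any leak edge $p\to0$), and then deleting node $1$. A spanning incoming forest of a graph is a spanning subgraph whose underlying undirected graph has no cycles and in which each node has at most one outgoing edge. $\mathcal F_j(H)$ is the set of spanning incoming forests of $H$ with exactly $j$ edges, and $\mathcal F_j^{k,\ell}(H)$ those in which some connected component contains both $k$ and $\ell$. $\pi_F$ is the product of the edge labels of $F$ ($1$ if no edges). *)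

(* Defs.v *)
From HB Require Import structures.
From mathcomp Require Import all_boot all_order all_algebra.
Set Implicit Arguments. Unset Strict Implicit. Unset Printing Implicit Defensive.
Import GRing.Theory.
Local Open Scope ring_scope.

(* A finite directed multigraph on vertex type V with edges 'I_ne carrying
   labels in R (multi-edges allowed: distinct edge indices are distinct edges). *)
Record mgraph (V : finType) (R : Type) := MGraph {
  ne : nat;
  esrc : 'I_ne -> V;
  etgt : 'I_ne -> V;
  elab : 'I_ne -> R }.

Definition mgraph_of_seq (V : finType) (R : Type) (s : seq (V * V * R)) : mgraph V R :=
  @MGraph V R (size s)
    (fun i => (tnth (in_tuple s) i).1.1)
    (fun i => (tnth (in_tuple s) i).1.2)
    (fun i => (tnth (in_tuple s) i).2).

Section Forests.
Variables (V : finType) (R : Type) (H : mgraph V R).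

Definition uadj (F : {set 'I_(ne H)}) : rel V := fun u v =>
  [exists e in F, ((esrc e == u) && (etgt e == v)) || ((esrc e == v) && (etgt e == u))].

(* underlying undirected graph of F has no cycle: every edge of F is a bridge,
   i.e. its endpoints are disconnected once it is removed (this also excludes
   self-loops and pairs of parallel edges) *)
Definition uacyclic (F : {set 'I_(ne H)}) : bool :=
  [forall e in F, ~~ connect (uadj (F :\ e)) (esrc e) (etgt e)].

Definition is_inforest (F : {set 'I_(ne H)}) : bool :=
  uacyclic F && [forall v : V, #|[set e in F | esrc e == v]| <= 1]%N.

Definition same_comp (F : {set 'I_(ne H)}) (k l : V) : bool := connect (uadj F) k l.

End Forests.

Definition forest_sum (V : finType) (R : comPzRingType) (H : mgraph V R) (j : nat) : R :=
  \sum_(F : {set 'I_(ne H)} | is_inforest F && (#|F| == j)) \prod_(e in F) elab e.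

Definition forest_sum_kl (V : finType) (R : comPzRingType) (H : mgraph V R) (j : nat)
  (k l : V) : R :=
  \sum_(F : {set 'I_(ne H)} | [&& is_inforest F, #|F| == j & same_comp F k l])
     \prod_(e in F) elab e.

(* Compartmental models with n.+1 compartments: compartment i+1 is the ordinal i
   (so compartment 1 is ord0).  Vertices of the leak-augmented graph are
   option 'I_n.+1, with None = node 0.  The edge set E contains (q, p) for an
   edge q -> p, labelled a (Some p) q = a_{pq}; the leak label a_{0p} is
   a None p. *)
Section Model.
Variables (R : comPzRingType) (n : nat) (E : {set 'I_n.+1 * 'I_n.+1})
  (Leak : {set 'I_n.+1}) (a : option 'I_n.+1 -> 'I_n.+1 -> R).

Definition Gt_edges : seq (option 'I_n.+1 * option 'I_n.+1 * R) :=
  [seq (Some qp.1, Some qp.2, a (Some qp.2) qp.1) | qp <- enum E] ++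
  [seq (Some p, None, a None p) | p <- enum Leak].

Definition Gtilde : mgraph (option 'I_n.+1) R := mgraph_of_seq Gt_edges.

Definition Gstar1_edges := [seq e <- Gt_edges | e.1.1 != Some ord0].
Definition Gtilde_star1 : mgraph (option 'I_n.+1) R := mgraph_of_seq Gstar1_edges.

(* \widetilde G_1 : node 1 deleted; vertex type option 'I_n where None = node 0
   and Some i = compartment i+2.  The vertex map sends node 1 to node 0, so every
   edge p -> 1 (label a_{1p}) becomes a separate edge p -> 0 with the same label. *)
Definition del1 (x : option 'I_n.+1) : option 'I_n :=
  if x is Some v then unlift ord0 v else None.

Definition Gtilde1 : mgraph (option 'I_n) R :=
  mgraph_of_seq [seq (del1 e.1.1, del1 e.1.2, e.2) | e <- Gstar1_edges].

End Model.

(* Main.v *)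
Require Import Defs.
From mathcomp Require Import all_boot all_order all_algebra.
Set Implicit Arguments. Unset Strict Implicit. Unset Printing Implicit Defensive.
Set Implicit Arguments. Unset Strict Implicit. Unset Printing Implicit Defensive.

Section Gen.
Variables (V : finType) (R : Type) (H : mgraph V R).

Lemma uadj_sym (F : {set 'I_(ne H)}) : symmetric (uadj F).
Proof.
move=> u v; apply/existsP/existsP => -[e /andP[eF h]]; exists e;
  rewrite eF /=; by rewrite orbC.
Qed.

Lemma connect_symF (F : {set 'I_(ne H)}) : connect_sym (uadj F).
Proof. exact/sym_connect_sym/uadj_sym. Qed.

Lemma uadjP (F : {set 'I_(ne H)}) u v : reflect (exists2 e, e \in F &
   (esrc e = u /\ etgt e = v) \/ (esrc e = v /\ etgt e = u)) (uadj F u v).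
Proof.
apply: (iffP existsP) => [[e /andP[eF /orP[/andP[/eqP<- /eqP<-]|/andP[/eqP<- /eqP<-]]]]|[e eF [[<- <-]|[<- <-]]]].
- by exists e => //; left.
- by exists e => //; right.
- by exists e; rewrite eF !eqxx.
- by exists e; rewrite eF !eqxx orbT.
Qed.

Lemma uadj_sub (F F' : {set 'I_(ne H)}) u v : F \subset F' -> uadj F u v -> uadj F' u v.
Proof.
move=> sF /uadjP[e eF h]; apply/uadjP; exists e => //; exact: (subsetP sF).
Qed.

Lemma connect_subF (F F' : {set 'I_(ne H)}) u v : F \subset F' -> connect (uadj F) u v -> connect (uadj F') u v.
Proof.
move=> sF; apply: connect_sub => x y h; apply: connect1; exact: uadj_sub h.
Qed.

Definition outdeg1 (F : {set 'I_(ne H)}) :=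
  forall e e', e \in F -> e' \in F -> esrc e = esrc e' -> e = e'.

Lemma outdegP (F : {set 'I_(ne H)}) : reflect (outdeg1 F) [forall v : V, #|[set e in F | esrc e == v]| <= 1]%N.
Proof.
apply: (iffP forallP) => [h e e' eF e'F se|h v].
  have /card_le1_eqP := h (esrc e); apply; by rewrite inE ?eF ?e'F ?se eqxx.
apply/card_le1_eqP => x y; rewrite !inE => /andP[xF /eqP xv] /andP[yF /eqP yv].
apply: h => //; by rewrite xv yv.
Qed.

Lemma walk (F : {set 'I_(ne H)}) (hF : outdeg1 F) p : forall u prev e, e \in F -> esrc e = u -> etgt e = prev ->
  path (uadj F) u p -> uniq (prev :: u :: p) -> exists2 e', e' \in F & esrc e' = last u p.
Proof.
elim: p => [|w p IH] u prev e eF se te /=.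
  by move=> _ _; exists e.
case/andP => /uadjP[e' e'F [[s' t']|[s' t']]] pth.
  have ee : e' = e by apply: hF => //; rewrite s' se.
  move: t'; rewrite ee te => ->; by rewrite !inE eqxx orbT.
move=> /andP[_ un]; exact: (IH w u e' e'F s' t' pth un).
Qed.

Lemma sink (F : {set 'I_(ne H)}) (hF : outdeg1 F) y z :
  (forall e, e \in F -> esrc e != y) -> (forall e, e \in F -> esrc e != z) ->
  connect (uadj F) y z -> y = z.
Proof.
move=> hy hz /connectP[p pth].
case: (shortenP pth) => [[|v1 p'] pth' un _] //= zE.
case/andP: pth' => /uadjP[e1 e1F [[s1 _]|[s1 t1]]] pth'.
  by move: (hy e1 e1F); rewrite s1 eqxx.
have [e' e'F se'] := walk hF e1F s1 t1 pth' un.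
by move: (hz e' e'F); rewrite se' zE eqxx.
Qed.

End Gen.
Section Merge.
Variables (V W : finType) (R : Type) (H1 : mgraph V R) (H2 : mgraph W R).
Variables (c : 'I_(ne H1) -> 'I_(ne H2)) (d : 'I_(ne H2) -> 'I_(ne H1)).
Hypotheses (cK : cancel c d) (dK : cancel d c).
Variables (g : V -> W) (x0 x1 : V).
Hypothesis hsrc : forall e, esrc (c e) = g (esrc e).
Hypothesis htgt : forall e, etgt (c e) = g (etgt e).
Hypothesis hg : forall u v, g u = g v -> u = v \/ ((u == x0) || (u == x1)) && ((v == x0) || (v == x1)).
Hypothesis hx : forall e : 'I_(ne H1), (esrc e != x0) && (esrc e != x1).

Let c_inj : injective c := can_inj cK.

Lemma hom (F : {set 'I_(ne H1)}) u v : connect (uadj F) u v -> connect (uadj (c @: F)) (g u) (g v).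
Proof.
move=> /connectP[p pth ->]; elim: p u pth => [|w p IH] u /=; first by move=> _; exact: connect0.
case/andP=> /uadjP[e eF h] pth; apply: connect_trans (IH _ pth).
apply: connect1; apply/uadjP; exists (c e); first exact: imset_f.
by rewrite hsrc htgt; case: h => -[-> ->]; [left|right].
Qed.

Section Q.
Variables (F : {set 'I_(ne H1)}) (u : V).
Definition reach v := connect (uadj F) v x0 || connect (uadj F) v x1.
Definition Q v := connect (uadj F) u v || reach u && reach v.

Lemma reach_step a b : uadj F a b -> reach a -> reach b.
Proof.
move=> ab; rewrite /reach => /orP[h|h]; apply/orP; [left|right];
  apply: connect_trans h; apply: connect1; by rewrite uadj_sym.
Qed.

Lemma Q_step a b : uadj F a b -> Q a -> Q b.
Proof.
move=> ab /orP[h|/andP[h1 h2]]; apply/orP; [left|right].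
  apply: connect_trans h (connect1 ab).
by rewrite h1 (reach_step ab h2).
Qed.

Lemma reachx v : (v == x0) || (v == x1) -> reach v.
Proof. by case/orP=> /eqP->; rewrite /reach connect0 ?orbT. Qed.

Lemma Q_merge a v : Q a -> (a == x0) || (a == x1) -> (v == x0) || (v == x1) -> Q v.
Proof.
move=> /orP[h|/andP[h1 h2]] ha hv; apply/orP; right; rewrite (reachx hv) andbT //.
case/orP: ha => /eqP ea; rewrite /reach; subst a; by rewrite h ?orbT.
Qed.

Lemma Q_g v v' : g v = g v' -> Q v -> Q v'.
Proof. by move=> /hg[->//|/andP[h1 h2] qv]; apply: Q_merge qv h1 h2. Qed.

Lemma merge v : connect (uadj (c @: F)) (g u) (g v) -> Q v.
Proof.
move=> /connectP[p pth].
suff: forall w, path (uadj (c @: F)) w p -> (forall v', g v' = w -> Q v') ->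
  forall v', g v' = last w p -> Q v' by move=> /(_ _ pth) h ev; apply: (h _ v ev) => v' /esym /Q_g; apply; rewrite /Q connect0.
elim: {pth} p => [|w' p IH] w /=; first by move=> _ h v' /h.
case/andP=> /uadjP[e2 /imsetP[e eF ->] h] pth hw; apply: IH pth _ => v'.
rewrite hsrc htgt in h; case: h => -[h1 h2] ev'.
- apply: (Q_g (etrans h2 (esym ev'))).
  apply: Q_step (hw _ h1); apply/uadjP; exists e => //; by left.
- apply: (Q_g (etrans h1 (esym ev'))).
  apply: Q_step (hw _ h2); apply/uadjP; exists e => //; by right.
Qed.
End Q.

Lemma imsetD1c (F : {set 'I_(ne H1)}) e : c @: (F :\ e) = c @: F :\ c e.
Proof.
apply/setP => x; rewrite !inE; apply/imsetP/andP => [[y]|[hne /imsetP[y yF xy]]].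
  rewrite !inE => /andP[ye yF] xy; subst x; by rewrite (inj_eq c_inj) ye imset_f.
subst x; exists y => //; rewrite !inE yF andbT; apply/negP => /eqP ye; by rewrite ye eqxx in hne.
Qed.

Lemma inforest_iff (F : {set 'I_(ne H1)}) : is_inforest (c @: F) = is_inforest F.
Proof.
rewrite /is_inforest /uacyclic.
have od : outdeg1 (c @: F) <-> outdeg1 F.
  split=> h e e' eF e'F se.
    apply: c_inj; apply: h; rewrite ?imset_f // !hsrc; by rewrite se.
  move: eF e'F se => /imsetP[y yF ->] /imsetP[y' y'F ->]; rewrite !hsrc => /hg[se|].
    by rewrite (h y y').
  by move: (hx y) => /andP[/negbTE-> /negbTE->].
apply/andP/andP => -[ac /outdegP oc]; (split; last by apply/outdegP; apply/od).
all: apply/forall_inP => e eF.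
- move/forall_inP: ac => /(_ (c e) (imset_f _ eF)); rewrite hsrc htgt -imsetD1c.
  by apply: contra; apply: hom.
- move: eF; case/imsetP => y yF ->; rewrite hsrc htgt -imsetD1c.
  apply/negP => /merge /orP[].
    by move/forall_inP: ac => /(_ y yF) /negP.
  have sF : F :\ y \subset F by apply/subsetP => z; rewrite inE => /andP[].
  have key : forall xi xj, (xi == x0) || (xi == x1) -> (xj == x0) || (xj == x1) ->
      connect (uadj (F :\ y)) (esrc y) xi -> connect (uadj (F :\ y)) (etgt y) xj -> False.
    move=> xi xj hi hj si tj.
    have nsrc : forall z, (z == x0) || (z == x1) -> forall e, e \in F -> esrc e != z.
      move=> z hz e0 _; apply/negP => /eqP ez; move: (hx e0) hz; rewrite ez.
      by case/andP => /negbTE-> /negbTE->.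
    have sym := connect_symF (F :\ y).
    have symF := connect_symF F.
    have eij : xi = xj.
      apply: (sink oc (nsrc _ hi) (nsrc _ hj)).
      apply: (connect_trans (y := esrc y)); first by rewrite symF; exact: connect_subF si.
      apply: (connect_trans (y := etgt y)).
        apply: connect1; apply/uadjP; exists y => //; by left.
      exact: connect_subF tj.
    subst xj; move/forall_inP: ac => /(_ y yF) /negP; apply.
    by apply: connect_trans si _; rewrite sym.
  case/andP; rewrite /reach => /orP[si|si] /orP[tj|tj];
    by apply: (key _ _ _ _ si tj); rewrite eqxx ?orbT.
Qed.
End Merge.
Import GRing.Theory.
Local Open Scope ring_scope.

Lemma forest_sum_iso (R : comPzRingType) (V W : finType) (H1 : mgraph V R) (H2 : mgraph W R)
  (c : 'I_(ne H1) -> 'I_(ne H2)) (d : 'I_(ne H2) -> 'I_(ne H1))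
  (cK : cancel c d) (dK : cancel d c) (hlab : forall e, elab (c e) = elab e)
  (hinf : forall F : {set 'I_(ne H1)}, is_inforest (c @: F) = is_inforest F) j :
  forest_sum H2 j = forest_sum H1 j.
Proof.
have c_inj : injective c := can_inj cK.
rewrite /forest_sum (reindex (fun F : {set 'I_(ne H1)} => c @: F)) /=.
  apply: eq_big => F; first by rewrite hinf card_imset.
  move=> _; rewrite big_imset /=; last by move=> x y _ _; apply: c_inj.
  by apply: eq_bigr => e _; rewrite hlab.
exists (fun F : {set 'I_(ne H2)} => d @: F) => F _.
  by rewrite -imset_comp (eq_imset _ cK) imset_id.
by rewrite -imset_comp (eq_imset _ dK) imset_id.
Qed.

Lemma forest_sum_kl_refl (R : comPzRingType) (V : finType) (H : mgraph V R) j x :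
  forest_sum_kl H j x x = forest_sum H j.
Proof.
by apply: eq_bigl => F; rewrite /same_comp connect0 andbT.
Qed.

Lemma tnth_map_cast (T U : Type) (f : T -> U) (s : seq T) (i : 'I_(size s)) :
  tnth (in_tuple (map f s)) (cast_ord (esym (size_map f s)) i) = f (tnth (in_tuple s) i).
Proof.
set x := tnth (in_tuple s) i.
rewrite (tnth_nth (f x)) {2}/x (tnth_nth x) /= (nth_map x) //.
Qed.

Lemma del1_inj n (u v : option 'I_n.+1) : del1 u = del1 v ->
  u = v \/ ((u == None) || (u == Some ord0)) && ((v == None) || (v == Some ord0)).
Proof.
case: u => [u|]; case: v => [v|] //=;
  do ?[case: (unliftP ord0 u) => [u'|] ->]; do ?[case: (unliftP ord0 v) => [v'|] ->] => //=;
  rewrite ?eqxx ?orbT; auto.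
by case=> ->; left.
Qed.

Theorem lemma3p11 (R : comPzRingType) (n : nat) (E : {set 'I_n.+1 * 'I_n.+1})
  (In Out Leak : {set 'I_n.+1}) (a : option 'I_n.+1 -> 'I_n.+1 -> R) :
  In = [set ord0] -> Out = [set ord0] ->
  forall j : nat, (0 < j)%N ->
    forest_sum_kl (Gtilde_star1 E Leak a) j (Some ord0) (Some ord0)
    = forest_sum (Gtilde1 E Leak a) j.
Proof.
move=> _ _ j _; rewrite forest_sum_kl_refl.
set s := Gstar1_edges E Leak a.
set f := (fun e : option 'I_n.+1 * option 'I_n.+1 * R => (del1 e.1.1, del1 e.1.2, e.2)).
pose c : 'I_(size s) -> 'I_(size (map f s)) := cast_ord (esym (size_map f s)).
pose d : 'I_(size (map f s)) -> 'I_(size s) := cast_ord (size_map f s).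
have cK : cancel c d by move=> i; apply: val_inj.
have dK : cancel d c by move=> i; apply: val_inj.
have hmem : forall i : 'I_(size s), (tnth (in_tuple s) i).1.1 != None /\ (tnth (in_tuple s) i).1.1 != Some ord0.
  move=> i; have := mem_tnth i (in_tuple s); rewrite mem_filter => /andP[h1].
  by rewrite mem_cat => /orP[] /mapP[x _ yx]; rewrite yx /= in h1 *.
symmetry; apply: (@forest_sum_iso R _ _ (Gtilde_star1 E Leak a) (Gtilde1 E Leak a) c d cK dK).
  by move=> e; rewrite /= tnth_map_cast.
move=> F; apply: (@inforest_iff _ _ R (Gtilde_star1 E Leak a) (Gtilde1 E Leak a) c d cK (@del1 n) None (Some ord0)).
- by move=> e; rewrite /= tnth_map_cast.
- by move=> e; rewrite /= tnth_map_cast.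
- exact: del1_inj.
- by move=> e; have [h1 h2] := hmem e; rewrite h1 h2.
Qed.
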